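(* Let $\mu_0\in\mathcal{P}(\mathbb{Z})$, $\varepsilon>0$ and $R\in\mathbb{N}$ with $R>R_{\mu_0}(\varepsilon)$. Then for all $n\in\mathbb{N}$ and all $w\in\Omega^{(0)}_n(\mu_0,2^{-R}\varepsilon)$, $|w_n|\le R+2\varepsilon n$.
   Context: $\overline{\mathbb{Z}}=\mathbb{Z}\cup\{\pm\infty\}$ with metric $d(h,k)=|\varphi(h)-\varphi(k)|$, $\varphi(\pm\infty)=\pm1$, $\varphi(k)=1-2^{-k}$ ($k\ge0$), $\varphi(k)=-1+2^{-|k|}$ ($k<0$). $\mathcal{P}(\mathbb{Z})$ is viewed inside $\mathcal{P}(\overline{\mathbb{Z}})$. For signed measures, $\|\nu\|=\sup\{\int f\,d\nu: f\text{ 1-Lipschitz for }d,\ \sup|f|\le1\}$; $B(\mu,\varepsilon)=\{\nu\in\mathcal{P}(\overline{\mathbb{Z}}):\|\nu-\mu\|<\varepsilon\}$. $\Omega^{(0)}_n$ is the set of $w=(w_1,\dots,w_n)\in\mathbb{Z}^n$ with $w_1=0$ and $|w_i-w_{i+1}|=1$; $\ell(w)=\frac1n\sum_{j}\delta_{w_j}$; $\Omega^{(0)}_n(\mu,\varepsilon)=\{w\in\Omega^{(0)}_n:\ell(w)\in B(\mu,\varepsilon)\}$. $R_{\mu_0}(\varepsilon)=\min\{R\in\mathbb{N}:\mu_0(\{-R+1,\dots,R-1\})>1-\varepsilon\}$. *)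

(* Defs.v *)
From Stdlib Require Import Reals ZArith List ClassicalEpsilon.
From Coquelicot Require Import Coquelicot.
Open Scope R_scope.

Inductive zbar : Type := ZFin (k : Z) | ZPinf | ZNinf.

Definition phiZ (k : Z) : R :=
  if (0 <=? k)%Z then 1 - (/2) ^ (Z.to_nat k) else -1 + (/2) ^ (Z.to_nat (- k)).

Definition phi (x : zbar) : R :=
  match x with ZFin k => phiZ k | ZPinf => 1 | ZNinf => -1 end.

Definition dZbar (h k : zbar) : R := Rabs (phi h - phi k).

Definition BL1 (f : zbar -> R) : Prop :=
  (forall x, Rabs (f x) <= 1) /\ (forall h k, Rabs (f h - f k) <= dZbar h k).

Definition symsum (a : Z -> R) (N : nat) : R :=
  sum_f_R0 (fun i => a (Z.of_nat i - Z.of_nat N)%Z) (2 * N).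

(* (signed) measures on the countable discrete space Zbar are represented by
   their weight functions nu : zbar -> R. *)
Definition finpart (nu : zbar -> R) : Z -> R := fun k => nu (ZFin k).

Definition integral (f : zbar -> R) (nu : zbar -> R) : R :=
  f ZPinf * nu ZPinf + f ZNinf * nu ZNinf
  + real (Lim_seq (symsum (fun k => f (ZFin k) * nu (ZFin k)))).

Definition probZbar (nu : zbar -> R) : Prop :=
  (forall x, 0 <= nu x) /\
  exists s, is_lim_seq (symsum (finpart nu)) s /\ nu ZPinf + nu ZNinf + s = 1.

Definition probZ (mu : Z -> R) : Prop :=
  (forall k, 0 <= mu k) /\ is_lim_seq (symsum mu) 1.

Definition embedZ (mu : Z -> R) : zbar -> R :=
  fun x => match x with ZFin k => mu k | _ => 0 end.

(* ||nu|| < delta, where ||nu|| = sup { ∫ f dnu : f ∈ BL1 } *)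
Definition norm_lt (nu : zbar -> R) (delta : R) : Prop :=
  exists c, c < delta /\ forall f, BL1 f -> integral f nu <= c.

Definition inBall (nu mu : zbar -> R) (eps : R) : Prop :=
  probZbar nu /\ norm_lt (fun x => nu x - mu x) eps.

(* walks w = (w_1,...,w_n) represented as lists; w_1 = nth 0 w *)
Definition Omega0 (n : nat) (w : list Z) : Prop :=
  length w = n /\ (0 < n)%nat /\ nth 0 w 0%Z = 0%Z /\
  (forall i, (S i < n)%nat -> Z.abs (nth i w 0%Z - nth (S i) w 0%Z) = 1%Z).

Definition ell (w : list Z) : zbar -> R :=
  fun x => match x with
           | ZFin k => INR (count_occ Z.eq_dec w k) / INR (length w)
           | _ => 0 end.

Definition Omega0_ball (n : nat) (mu : Z -> R) (eps : R) (w : list Z) : Prop :=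
  Omega0 n w /\ inBall (ell w) (embedZ mu) eps.

(* mu({-R+1,...,R-1}) *)
Definition massI (mu : Z -> R) (R0 : nat) : R :=
  match R0 with O => 0 | S r => symsum mu r end.

Definition Rgood (mu : Z -> R) (eps : R) (R0 : nat) : Prop := massI mu R0 > 1 - eps.

Definition R_mu (mu : Z -> R) (eps : R) : nat :=
  epsilon (inhabits 0%nat)
    (fun R0 => Rgood mu eps R0 /\ forall R', Rgood mu eps R' -> (R0 <= R')%nat).

(* Main.v *)
Require Import Defs.
From Stdlib Require Import Reals ZArith List Lia Lra ClassicalEpsilon Classical.
From Coquelicot Require Import Coquelicot.
Open Scope R_scope.

Lemma symsum_0 a : symsum a 0 = a 0%Z.
Proof. reflexivity. Qed.

Lemma symsum_S a N : symsum a (S N) = symsum a N + a (- Z.of_nat (S N))%Z + a (Z.of_nat (S N)).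
Proof.
  unfold symsum.
  replace (2 * S N)%nat with (S (S (2 * N))) by lia.
  rewrite decomp_sum by lia. simpl Init.Nat.pred. rewrite tech5.
  rewrite (sum_eq _ (fun i => a (Z.of_nat i - Z.of_nat N)%Z)).
  2:{ intros i _. f_equal. lia. }
  replace (Z.of_nat 0 - Z.of_nat (S N))%Z with (- Z.of_nat (S N))%Z by lia.
  replace (Z.of_nat (S (S (N + (N + 0)))) - Z.of_nat (S N))%Z with (Z.of_nat (S N)) by lia.
  replace (N + (N + 0))%nat with (2 * N)%nat by lia.
  lra.
Qed.

Lemma symsum_ext a b N : (forall k, a k = b k) -> symsum a N = symsum b N.
Proof. intros H. induction N. rewrite !symsum_0; auto. rewrite !symsum_S, IHN, !H; auto. Qed.

Lemma symsum_minus a b N : symsum (fun k => a k - b k) N = symsum a N - symsum b N.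
Proof. induction N. rewrite !symsum_0; auto. rewrite !symsum_S, IHN. lra. Qed.

Lemma symsum_scal c a N : symsum (fun k => c * a k) N = c * symsum a N.
Proof. induction N. rewrite !symsum_0; auto. rewrite !symsum_S, IHN. lra. Qed.

Lemma symsum_nonneg a N : (forall k, 0 <= a k) -> 0 <= symsum a N.
Proof. intros H. induction N. rewrite symsum_0; auto. rewrite symsum_S. specialize (H (- Z.of_nat (S N))%Z) as H1. specialize (H (Z.of_nat (S N))). lra. Qed.

Lemma symsum_monoN a N K : (forall k, 0 <= a k) -> (N <= K)%nat -> symsum a N <= symsum a K.
Proof. intros H HK. induction HK. lra. rewrite symsum_S. specialize (H (- Z.of_nat (S m))%Z) as H1. specialize (H (Z.of_nat (S m))). lra. Qed.

Definition gI (R0 : nat) (k : Z) : R := if (Z.of_nat R0 <=? Z.abs k)%Z then 1 else 0.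

Lemma gI_0 R0 k : (Z.abs k < Z.of_nat R0)%Z -> gI R0 k = 0.
Proof. intros; unfold gI. destruct (Z.leb_spec (Z.of_nat R0) (Z.abs k)); lra || lia. Qed.
Lemma gI_1 R0 k : (Z.of_nat R0 <= Z.abs k)%Z -> gI R0 k = 1.
Proof. intros; unfold gI. destruct (Z.leb_spec (Z.of_nat R0) (Z.abs k)); lra || lia. Qed.
Lemma gI_range R0 k : 0 <= gI R0 k <= 1.
Proof. unfold gI. destruct (Z.leb_spec (Z.of_nat R0) (Z.abs k)); lra. Qed.

Lemma symsum_g_small R0 a N : (1 <= R0)%nat -> (N < R0)%nat -> symsum (fun k => gI R0 k * a k) N = 0.
Proof.
  intros H1. induction N; intros H2.
  rewrite symsum_0, gI_0 by (simpl; lia). lra.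
  rewrite symsum_S, IHN by lia. rewrite !gI_0 by lia. lra.
Qed.

Lemma symsum_g_big R0 a k : (1 <= R0)%nat ->
  symsum (fun k => gI R0 k * a k) (R0 - 1 + k) = symsum a (R0 - 1 + k) - symsum a (R0 - 1).
Proof.
  intros H1. induction k.
  rewrite Nat.add_0_r, symsum_g_small by lia. lra.
  replace (R0 - 1 + S k)%nat with (S (R0 - 1 + k)) by lia.
  rewrite !symsum_S, IHk. rewrite !gI_1 by lia. lra.
Qed.

Lemma pow_half_bounds k : 0 < (/2)^k <= 1.
Proof. induction k; simpl; lra. Qed.

Lemma pow_half_mono a b : (a <= b)%nat -> (/2)^b <= (/2)^a.
Proof. intros H. replace b with (a + (b - a))%nat by lia. rewrite pow_add.
  pose proof (pow_half_bounds a). pose proof (pow_half_bounds (b-a)). nra. Qed.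

Section Walk.
Variables (n : nat) (w : list Z).
Hypothesis Hlen : length w = n.
Hypothesis Hn : (0 < n)%nat.
Hypothesis H0 : nth 0 w 0%Z = 0%Z.
Hypothesis Hstep : forall i, (S i < n)%nat -> Z.abs (nth i w 0%Z - nth (S i) w 0%Z) = 1%Z.

Lemma walk_bound i : (i < n)%nat -> (Z.abs (nth i w 0%Z) <= Z.of_nat i)%Z.
Proof.
  induction i; intros Hi. rewrite H0. simpl. lia.
  specialize (IHi ltac:(lia)). specialize (Hstep i Hi). lia.
Qed.

Lemma walk_ivt i : (i < n)%nat -> forall m,
  ((0 <= m <= nth i w 0%Z) \/ (nth i w 0%Z <= m <= 0))%Z -> In m w.
Proof.
  induction i; intros Hi m Hm.
  - rewrite H0 in Hm. replace m with (nth 0 w 0%Z) by lia. apply nth_In. lia.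
  - destruct (Z.eq_dec m (nth (S i) w 0%Z)) as [->|Hne].
    + apply nth_In. lia.
    + specialize (Hstep i Hi). apply IHi. lia. lia.
Qed.

Lemma cnt_zero k : (Z.of_nat n <= Z.abs k)%Z -> count_occ Z.eq_dec w k = 0%nat.
Proof.
  intros Hk. apply count_occ_not_In. intros HIn.
  destruct (In_nth w k 0%Z HIn) as [j [Hj Hjk]].
  pose proof (walk_bound j ltac:(lia)). lia.
Qed.

Definition cnt (k : Z) : R := INR (count_occ Z.eq_dec w k).

Lemma cnt_nonneg k : 0 <= cnt k.
Proof. apply pos_INR. Qed.

Lemma A_lower R0 N : (1 <= R0)%nat ->
  INR (Nat.min N (Z.to_nat (Z.abs (nth (n - 1) w 0%Z))) + 1 - R0)
  <= symsum (fun k => gI R0 k * cnt k) N.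
Proof.
  set (x := nth (n - 1) w 0%Z). set (M := Z.to_nat (Z.abs x)).
  intros HR. induction N.
  - rewrite symsum_0. replace (Nat.min 0 M + 1 - R0)%nat with 0%nat by lia.
    simpl. pose proof (gI_range R0 0). pose proof (cnt_nonneg 0). nra.
  - rewrite symsum_S.
    pose proof (gI_range R0 (- Z.of_nat (S N))). pose proof (cnt_nonneg (- Z.of_nat (S N))).
    pose proof (gI_range R0 (Z.of_nat (S N))). pose proof (cnt_nonneg (Z.of_nat (S N))).
    destruct (le_lt_dec R0 (S N)) as [h1|h1]; [destruct (le_lt_dec (S N) M) as [h2|h2]|].
    + replace (Nat.min (S N) M + 1 - R0)%nat with (S (Nat.min N M + 1 - R0)) by lia.
      rewrite S_INR.
      destruct (Z.le_gt_cases 0 x) as [hx|hx].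
      * assert (HI : In (Z.of_nat (S N)) w).
        { apply (walk_ivt (n - 1)). lia. left. unfold M in h2. lia. }
        apply (count_occ_In Z.eq_dec) in HI.
        assert (1 <= cnt (Z.of_nat (S N))). { unfold cnt. change 1 with (INR 1). apply le_INR. lia. }
        rewrite (gI_1 R0 (Z.of_nat (S N))) by lia. nra.
      * assert (HI : In (- Z.of_nat (S N))%Z w).
        { apply (walk_ivt (n - 1)). lia. right. unfold M in h2. lia. }
        apply (count_occ_In Z.eq_dec) in HI.
        assert (1 <= cnt (- Z.of_nat (S N))). { unfold cnt. change 1 with (INR 1). apply le_INR. lia. }
        rewrite (gI_1 R0 (- Z.of_nat (S N))) by lia. nra.
    + assert (INR (Nat.min (S N) M + 1 - R0) <= INR (Nat.min N M + 1 - R0)) by (apply le_INR; lia).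
      nra.
    + assert (INR (Nat.min (S N) M + 1 - R0) <= INR (Nat.min N M + 1 - R0)) by (apply le_INR; lia).
      nra.
Qed.

Lemma A_const R0 N : (n <= N)%nat ->
  symsum (fun k => gI R0 k * cnt k) N = symsum (fun k => gI R0 k * cnt k) n.
Proof.
  intros H. induction H. reflexivity.
  rewrite symsum_S, IHle. unfold cnt. rewrite !cnt_zero by lia. simpl. lra.
Qed.

End Walk.

Lemma least_exists (P : nat -> Prop) : (exists n, P n) -> exists m, P m /\ forall k, P k -> (m <= k)%nat.
Proof.
  intros [n Hn]. destruct (classic (exists m, P m /\ forall k, P k -> (m <= k)%nat)) as [H|H]; auto.
  exfalso. assert (forall k, ~ P k).
  { intros k. induction k as [k IH] using (well_founded_induction lt_wf).
    intros Pk. apply H. exists k. split; auto. intros j Pj.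
    destruct (le_lt_dec k j); auto. exfalso. exact (IH j l Pj). }
  exact (H0 n Hn).
Qed.

Definition Gx (R0 : nat) (x : zbar) : R := match x with ZFin k => gI R0 k | _ => 1 end.
Definition fT (R0 : nat) (x : zbar) : R := (/2)^R0 * Gx R0 x.
Definition inner (R0 : nat) (x : zbar) : Prop :=
  match x with ZFin k => (Z.abs k < Z.of_nat R0)%Z | _ => False end.

Lemma phi_inner r x : inner (S r) x -> Rabs (phi x) <= 1 - 2 * (/2)^(S r).
Proof.
  destruct x as [k| |]; simpl; try tauto. intros Hk.
  replace (2 * (/2 * (/2)^r)) with ((/2)^r) by field.
  unfold phiZ. destruct (Z.leb_spec 0 k).
  - pose proof (pow_half_mono (Z.to_nat k) r ltac:(lia)). pose proof (pow_half_bounds (Z.to_nat k)).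
    rewrite Rabs_pos_eq; lra.
  - pose proof (pow_half_mono (Z.to_nat (-k)) r ltac:(lia)). pose proof (pow_half_bounds (Z.to_nat (-k))).
    rewrite Rabs_left1; lra.
Qed.

Lemma phi_outer R0 x : ~ inner R0 x -> phi x >= 1 - (/2)^R0 \/ phi x <= -1 + (/2)^R0.
Proof.
  pose proof (pow_half_bounds R0).
  destruct x as [k| |]; simpl; try lra. intros Hk.
  unfold phiZ. destruct (Z.leb_spec 0 k).
  - pose proof (pow_half_mono R0 (Z.to_nat k) ltac:(lia)). lra.
  - pose proof (pow_half_mono R0 (Z.to_nat (-k)) ltac:(lia)). lra.
Qed.

Lemma Gx_inner R0 x : inner R0 x -> Gx R0 x = 0.
Proof. destruct x; simpl; try tauto. intros; apply gI_0; auto. Qed.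
Lemma Gx_outer R0 x : ~ inner R0 x -> Gx R0 x = 1.
Proof. destruct x; simpl; auto. intros; apply gI_1; lia. Qed.

Lemma BL1_fT r : BL1 (fT (S r)).
Proof.
  pose proof (pow_half_bounds (S r)).
  split.
  - intros x. unfold fT. destruct (classic (inner (S r) x)).
    + rewrite Gx_inner by auto. rewrite Rmult_0_r, Rabs_R0. lra.
    + rewrite Gx_outer by auto. rewrite Rmult_1_r, Rabs_pos_eq; lra.
  - intros h k. unfold fT, dZbar.
    destruct (classic (inner (S r) h)) as [Hh|Hh]; destruct (classic (inner (S r) k)) as [Hk|Hk].
    + rewrite !Gx_inner by auto. rewrite Rmult_0_r, Rminus_0_r, Rabs_R0. apply Rabs_pos.
    + rewrite Gx_inner, Gx_outer by auto. pose proof (phi_inner r h Hh). pose proof (phi_outer _ k Hk).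
      revert H0 H1. split_Rabs; lra.
    + rewrite Gx_outer, Gx_inner by auto. pose proof (phi_inner r k Hk). pose proof (phi_outer _ h Hh).
      revert H0 H1. split_Rabs; lra.
    + rewrite !Gx_outer by auto. rewrite Rminus_diag, Rabs_R0. apply Rabs_pos.
Qed.

Theorem corollary2p4 (mu0 : Z -> R) (eps : R) (R0 : nat) :
  probZ mu0 -> 0 < eps -> (R_mu mu0 eps < R0)%nat ->
  forall (n : nat) (w : list Z),
    Omega0_ball n mu0 (eps / 2 ^ R0) w ->
    IZR (Z.abs (nth (n - 1) w 0%Z)) <= INR R0 + 2 * eps * INR n.
Proof.
  intros [Hmu_nn Hmu_lim] Heps HR n w [[Hlen [Hn [H0 Hstep]]] [_ [c' [Hc' Hint]]]].
  apply is_lim_seq_Reals in Hmu_lim.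
  assert (Hex : exists r, Rgood mu0 eps r).
  { destruct (Hmu_lim eps Heps) as [N HN]. exists (S N). unfold Rgood, massI.
    specialize (HN N (le_n N)). unfold R_dist in HN. revert HN. split_Rabs; lra. }
  apply least_exists in Hex.
  pose proof (@epsilon_spec nat (inhabits 0%nat)
     (fun R1 => Rgood mu0 eps R1 /\ forall R', Rgood mu0 eps R' -> (R1 <= R')%nat) Hex) as Hs.
  fold (R_mu mu0 eps) in Hs. destruct Hs as [Hgood _].
  destruct R0 as [|r]; [lia|].
  assert (HS0 : symsum mu0 r > 1 - eps).
  { unfold Rgood, massI in Hgood. destruct (R_mu mu0 eps) as [|r'] eqn:E.
    - pose proof (symsum_nonneg mu0 r Hmu_nn). lra.
    - pose proof (symsum_monoN mu0 r' r Hmu_nn ltac:(lia)). lra. }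
  assert (Hle1 : forall N, symsum mu0 N <= 1).
  { intros N. destruct (Rle_lt_dec (symsum mu0 N) 1) as [h|h]; auto. exfalso.
    destruct (Hmu_lim (symsum mu0 N - 1) ltac:(lra)) as [N' HN'].
    specialize (HN' (Nat.max N N') ltac:(lia)).
    pose proof (symsum_monoN mu0 N (Nat.max N N') Hmu_nn ltac:(lia)).
    unfold R_dist in HN'. revert HN'. split_Rabs; lra. }
  specialize (Hint (fT (S r)) (BL1_fT r)).
  set (c := (/2)^(S r)) in *.
  assert (Hc : 0 < c) by (apply pow_half_bounds).
  set (x := nth (n - 1) w 0%Z) in *.
  set (M := Z.to_nat (Z.abs x)).
  set (u := symsum (fun k => fT (S r) (ZFin k) * (ell w (ZFin k) - embedZ mu0 (ZFin k)))).
  set (A := symsum (fun k => gI (S r) k * cnt w k)).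
  set (B := symsum (fun k => gI (S r) k * mu0 k)).
  assert (Hu : forall N, u N = c * (A N * / INR n - B N)).
  { intros N. unfold u, A, B.
    rewrite (symsum_ext _ (fun k => c * ((/ INR n) * (gI (S r) k * cnt w k) - gI (S r) k * mu0 k))).
    - rewrite symsum_scal, symsum_minus, symsum_scal. ring.
    - intros k. unfold fT, c, cnt. simpl Gx. simpl ell. simpl embedZ. rewrite Hlen. unfold Rdiv. ring. }
  assert (HB : forall N, (r <= N)%nat -> B N <= 1 - symsum mu0 r).
  { intros N HN. unfold B. replace N with (S r - 1 + (N - r))%nat by lia.
    rewrite symsum_g_big by lia. replace (S r - 1)%nat with r by lia.
    specialize (Hle1 (r + (N - r))%nat). lra. }
  assert (HB0 : forall N, 0 <= B N).
  { intros N. apply symsum_nonneg. intros k. pose proof (gI_range (S r) k). pose proof (Hmu_nn k). nra. }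
  assert (HA : forall N, (M <= N)%nat -> INR (M + 1 - S r) <= A N).
  { intros N HN. unfold A. pose proof (A_lower n w Hlen Hn H0 Hstep (S r) N ltac:(lia)).
    fold x M in H. replace (Nat.min N M) with M in H by lia. exact H. }
  assert (HAc : forall N, (n <= N)%nat -> A N = A n).
  { intros N HN. unfold A. apply (A_const n w Hlen Hn H0 Hstep). auto. }
  assert (Hn' : 0 < INR n) by (apply lt_0_INR; lia).
  set (L := c * (INR (M + 1 - S r) * / INR n - (1 - symsum mu0 r))).
  set (U := c * (A n * / INR n)).
  assert (HLo : Rbar_le (Finite L) (Lim_seq u)).
  { rewrite <- (Lim_seq_const L). apply Lim_seq_le_loc.
    exists (Nat.max r (Nat.max M n)). intros N HN. rewrite Hu.
    specialize (HB N ltac:(lia)). specialize (HA N ltac:(lia)). unfold L.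
    apply Rmult_le_compat_l. lra.
    assert (INR (M + 1 - S r) * / INR n <= A N * / INR n).
    { apply Rmult_le_compat_r. left; apply Rinv_0_lt_compat; auto. auto. }
    lra. }
  assert (HUp : Rbar_le (Lim_seq u) (Finite U)).
  { rewrite <- (Lim_seq_const U). apply Lim_seq_le_loc.
    exists n. intros N HN. rewrite Hu, HAc by auto. unfold U. specialize (HB0 N). nra. }
  unfold integral in Hint. fold u in Hint.
  destruct (Lim_seq u) as [l| |] eqn:El; simpl in HLo, HUp; try contradiction.
  simpl in Hint. unfold fT in Hint. simpl Gx in Hint.
  assert (Hl : L <= l) by exact HLo.
  assert (Hce : eps / 2 ^ S r = eps * c).
  { unfold c. rewrite pow_inv. unfold Rdiv. ring. }
  rewrite Hce in Hc'.
  assert (HX : INR (M + 1 - S r) * / INR n - (1 - symsum mu0 r) < eps).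
  { apply (Rmult_lt_reg_l c); auto. fold L. lra. }
  assert (HY : INR (M + 1 - S r) < 2 * eps * INR n).
  { assert (INR (M + 1 - S r) * / INR n < 2 * eps) by lra.
    replace (INR (M + 1 - S r)) with (INR (M + 1 - S r) * / INR n * INR n) by (field; lra).
    nra. }
  assert (HZ : IZR (Z.abs x) = INR M).
  { rewrite INR_IZR_INZ. f_equal. unfold M. lia. }
  rewrite HZ.
  pose proof (pos_INR n).
  destruct (le_lt_dec (S r) M).
  - replace (M + 1 - S r)%nat with (M - r)%nat in HY by lia.
    rewrite minus_INR in HY by lia. rewrite S_INR. lra.
  - assert (INR M <= INR (S r)) by (apply le_INR; lia). nra.
Qed.
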